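(* Let $E$ be a finite-dimensional complex Hilbert space, $e\in E$ a unit vector, $\tau\in(0,1)$, and let $T_0\in B(E)_+$ be strictly positive. Define $$T_{n+1}:=T_n^{1/2}\bigl(I_E-\tau|e\rangle\langle e|\bigr)T_n^{1/2}\qquad(n\ge0),$$ and $T_\infty:=\lim_nT_n$. Let $\mathcal{K}$ be the maximal $T_0$-reducing subspace contained in $e^\perp$, and assume $\dim\mathcal{K}^\perp=2$. Then, with respect to $E=\mathcal{K}\oplus\mathcal{K}^\perp$, $$T_\infty=T_0|_{\mathcal{K}}\oplus0.$$
   Context: For vectors $x,y$, $|x\rangle\langle y|$ denotes the operator $z\mapsto\langle y,z\rangle x$. $B(E)_+$ denotes positive operators; $T^{1/2}$ is the positive square root. A subspace reduces an operator if it and its orthogonal complement are invariant. The sequence $(T_n)$ is decreasing in the operator order, so the norm limit exists. *)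

(* Defs.v *)
(* complex numbers are R[i] (mathcomp-real-closed) over a
   realType R; operators on the d-dimensional Hilbert space E = 'cV[R[i]]_d
   are d x d matrices acting on column vectors. *)
From HB Require Import structures.
From mathcomp Require Import all_boot all_order all_algebra.
From mathcomp Require Import sesquilinear.
From mathcomp Require Import reals.
From mathcomp Require Import complex.
From Stdlib Require Import ClassicalEpsilon.
Set Implicit Arguments. Unset Strict Implicit. Unset Printing Implicit Defensive.
Import Order.TTheory GRing.Theory Num.Theory.
Local Open Scope ring_scope.

Section Defs.
Variable R : realType.
Local Notation C := (R[i]).
Variable d : nat.
Local Notation vec := 'cV[C]_d.
Local Notation op := 'M[C]_d.

Definition adjmx m n (A : 'M[C]_(m, n)) : 'M[C]_(n, m) := map_mx Num.conj (A ^T).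

(* inner product <y, z> = y^* z, conjugate-linear in the first argument *)
Definition inner (y z : vec) : C := (adjmx y *m z) 0 0.

Definition ketbra (x y : vec) : op := x *m adjmx y.

Definition posop (A : op) : Prop :=
  adjmx A = A /\ forall v : vec, 0 <= inner v (A *m v).

(* strictly positive operators (positive and invertible; in finite dimension
   equivalently positive definite) *)
Definition strictly_posop (A : op) : Prop :=
  adjmx A = A /\ forall v : vec, v != 0 -> 0 < inner v (A *m v).

(* the positive square root T^{1/2}: the (unique) positive S with S S = T
   (chosen by Hilbert's epsilon; default irrelevant for non-positive T) *)
Definition psqrt (T : op) : op :=
  epsilon (inhabits 0) (fun S : op => posop S /\ S *m S = T).

(* norm convergence of a sequence of operators (entrywise; all norms on the
   finite-dimensional space B(E) are equivalent) *)
Definition op_cvg (T : nat -> op) (L : op) : Prop :=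
  forall eps : C, 0 < eps -> exists N : nat, forall n : nat, (N <= n)%N ->
    forall i j, `|T n i j - L i j| < eps.

Definition orthv (K : {vspace vec}) (v : vec) : Prop :=
  forall k : vec, k \in K -> inner k v = 0.

Definition invariant (A : op) (P : vec -> Prop) : Prop :=
  forall v : vec, P v -> P (A *m v).

Definition reduces (A : op) (K : {vspace vec}) : Prop :=
  invariant A (fun v => v \in K) /\ invariant A (orthv K).

Definition sub_perp (K : {vspace vec}) (e : vec) : Prop :=
  forall k : vec, k \in K -> inner e k = 0.

Definition max_reducing_in_perp (A : op) (e : vec) (K : {vspace vec}) : Prop :=
  [/\ reduces A K, sub_perp K e &
      forall K' : {vspace vec}, reduces A K' -> sub_perp K' e -> (K' <= K)%VS].

Definition dim_orth (K : {vspace vec}) (n : nat) : Prop :=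
  exists W : {vspace vec}, (forall v : vec, v \in W <-> orthv K v) /\ \dim W = n.

End Defs.

(* Main.v *)
Require Import Defs.
From HB Require Import structures.
From mathcomp Require Import all_boot all_order all_algebra.
From mathcomp Require Import sesquilinear spectral reals complex.
From mathcomp Require Import ring lra.
From Stdlib Require Import Classical.
From Stdlib Require Import ClassicalEpsilon.
Set Implicit Arguments. Unset Strict Implicit. Unset Printing Implicit Defensive.
Import Order.TTheory GRing.Theory Num.Theory.
Local Open Scope ring_scope.

Section Basics.
Variable R : realType.
Local Notation C := (R[i]).

Lemma adjmxE m n (A : 'M[C]_(m, n)) i j : adjmx A i j = (A j i)^*.
Proof. by rewrite /adjmx !mxE. Qed.

Lemma adjmxK m n (A : 'M[C]_(m, n)) : adjmx (adjmx A) = A.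
Proof. by apply/matrixP => i j; rewrite !adjmxE conjCK. Qed.

Lemma adjmxM m n p (A : 'M[C]_(m, n)) (B : 'M[C]_(n, p)) :
  adjmx (A *m B) = adjmx B *m adjmx A.
Proof. by rewrite /adjmx trmx_mul map_mxM. Qed.

Lemma adjmxD m n (A B : 'M[C]_(m, n)) : adjmx (A + B) = adjmx A + adjmx B.
Proof. by apply/matrixP => i j; rewrite !mxE rmorphD. Qed.

Lemma adjmxN m n (A : 'M[C]_(m, n)) : adjmx (- A) = - adjmx A.
Proof. by apply/matrixP => i j; rewrite !mxE rmorphN. Qed.

Lemma adjmxB m n (A B : 'M[C]_(m, n)) : adjmx (A - B) = adjmx A - adjmx B.
Proof. by rewrite adjmxD adjmxN. Qed.

Lemma adjmxZ m n (a : C) (A : 'M[C]_(m, n)) : adjmx (a *: A) = a^* *: adjmx A.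
Proof. by apply/matrixP => i j; rewrite !mxE rmorphM. Qed.

Lemma adjmx1 n : adjmx (1%:M : 'M[C]_n) = 1%:M.
Proof. by rewrite /adjmx trmx1 map_mx1. Qed.

Variable d : nat.
Local Notation vec := 'cV[C]_d.
Local Notation op := 'M[C]_d.

Lemma innerE (y z : vec) : inner y z = \sum_i (y i 0)^* * z i 0.
Proof. by rewrite /inner !mxE; apply: eq_bigr => i _; rewrite adjmxE. Qed.

Lemma inner_mulmx (y z : vec) (A : op) : inner y (A *m z) = inner (adjmx A *m y) z.
Proof. by rewrite /inner adjmxM adjmxK mulmxA. Qed.

Lemma inner_herm (A : op) (hA : adjmx A = A) (y z : vec) : inner y (A *m z) = inner (A *m y) z.
Proof. by rewrite inner_mulmx hA. Qed.

Lemma innerDr (y z1 z2 : vec) : inner y (z1 + z2) = inner y z1 + inner y z2.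
Proof. by rewrite /inner mulmxDr mxE. Qed.

Lemma innerZr (y z : vec) a : inner y (a *: z) = a * inner y z.
Proof. by rewrite /inner -scalemxAr mxE. Qed.

Lemma innerNr (y z : vec) : inner y (- z) = - inner y z.
Proof. by rewrite /inner mulmxN mxE. Qed.

Lemma innerBr (y z1 z2 : vec) : inner y (z1 - z2) = inner y z1 - inner y z2.
Proof. by rewrite innerDr innerNr. Qed.

Lemma inner0r (y : vec) : inner y 0 = 0.
Proof. by rewrite /inner mulmx0 mxE. Qed.

Lemma conj_inner (y z : vec) : (inner y z)^* = inner z y.
Proof.
rewrite !innerE rmorph_sum; apply: eq_bigr => i _.
by rewrite rmorphM /= conjCK mulrC.
Qed.

Lemma innerDl (y1 y2 z : vec) : inner (y1 + y2) z = inner y1 z + inner y2 z.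
Proof. by rewrite -conj_inner innerDr rmorphD /= !conj_inner. Qed.

Lemma innerZl (y z : vec) a : inner (a *: y) z = a^* * inner y z.
Proof. by rewrite -conj_inner innerZr rmorphM /= !conj_inner. Qed.

Lemma innerNl (y z : vec) : inner (- y) z = - inner y z.
Proof. by rewrite -conj_inner innerNr rmorphN /= conj_inner. Qed.

Lemma innerBl (y1 y2 z : vec) : inner (y1 - y2) z = inner y1 z - inner y2 z.
Proof. by rewrite innerDl innerNl. Qed.

Lemma inner0l (y : vec) : inner 0 y = 0.
Proof. by rewrite -conj_inner inner0r rmorph0. Qed.

Lemma inner_ge0 (v : vec) : 0 <= inner v v.
Proof. by rewrite innerE; apply: sumr_ge0 => i _; rewrite mulrC mul_conjC_ge0. Qed.

Lemma inner_eq0 (v : vec) : inner v v = 0 -> v = 0.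
Proof.
rewrite innerE => /eqP; rewrite psumr_eq0 => [/allP H|i _]; last by rewrite mulrC mul_conjC_ge0.
apply/matrixP => i j; rewrite ord1 mxE.
have := H i (mem_index_enum _); rewrite implyTb mulrC mul_conjC_eq0 => /eqP //.
Qed.

Lemma ketbraE (x y z : vec) : ketbra x y *m z = inner y z *: x.
Proof.
rewrite /ketbra -mulmxA [adjmx y *m z]mx11_scalar mul_mx_scalar.
by rewrite /inner.
Qed.

Lemma adj_ketbra (x y : vec) : adjmx (ketbra x y) = ketbra y x.
Proof. by rewrite /ketbra adjmxM adjmxK. Qed.

Lemma mx_ext (A B : op) : (forall v : vec, A *m v = B *m v) -> A = B.
Proof.
move=> H; apply/matrixP => i j.
have := congr1 (fun M : 'cV[C]_d => M i 0) (H (delta_mx j 0)).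
by rewrite -!colE !mxE.
Qed.

End Basics.
Section Spec.
Variable R : realType.
Local Notation C := (R[i]).
Variable d : nat.
Local Notation vec := 'cV[C]_d.
Local Notation op := 'M[C]_d.

Lemma herm_spectral (H : op) : adjmx H = H ->
  exists U : op, exists s : 'rV[C]_d,
    [/\ U *m adjmx U = 1%:M, adjmx U *m U = 1%:M & H = adjmx U *m diag_mx s *m U].
Proof.
move=> hH.
have hh : H \is hermsymmx by apply/is_hermitianmxP; rewrite expr0 scale1r; exact: esym hH.
have /orthomx_spectralP := hermitian_normalmx hh.
set U := spectralmx H; set s := spectral_diag H => HE.
have Uu : U \is unitarymx by exact: spectral_unitarymx.
exists U, s; split.
- exact/unitarymxP.
- by have := mulmxKtV (1%:M : op) Uu erefl; rewrite mul1mx.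
- by rewrite {1}HE invmx_unitary.
Qed.

Lemma delta_inner (i j : 'I_d) : inner (delta_mx i 0 : vec) (delta_mx j 0) = (i == j)%:R.
Proof.
rewrite innerE (bigD1 i) //= big1 => [|k ki]; last by rewrite !mxE (negbTE ki) /= rmorph0 mul0r.
by rewrite !mxE !eqxx /= conjC1 mul1r addr0 andbT.
Qed.

Lemma spectral_eigen (U : op) (s : 'rV[C]_d) (i : 'I_d) :
  U *m adjmx U = 1%:M ->
  let v := adjmx U *m (delta_mx i 0 : vec) in
  (adjmx U *m diag_mx s *m U) *m v = s 0 i *: v /\ inner v v = 1.
Proof.
move=> hU v; split.
  rewrite /v -!mulmxA [U *m (_ *m _)]mulmxA hU mul1mx mul_diag_mx.
  rewrite scalemxAr; congr (_ *m _); apply/matrixP => a b; rewrite !mxE ord1 /=.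
  by case: (a == i) / eqP => [->|_]; rewrite /= ?mulr0 ?mulr1 ?mulr0.
by rewrite /v inner_mulmx adjmxK mulmxA hU mul1mx delta_inner eqxx.
Qed.

End Spec.
Section Sqrt.
Variable R : realType.
Local Notation C := (R[i]).
Variable d : nat.
Local Notation vec := 'cV[C]_d.
Local Notation op := 'M[C]_d.

Lemma conj_nneg (x : C) : 0 <= x -> x^* = x.
Proof. by move=> hx; apply: conj_Creal; apply: ger0_real. Qed.

Lemma psqrt_exists (T : op) : posop T -> exists S : op, posop S /\ S *m S = T.
Proof.
case=> hA hpos.
have [U [s [hU1 hU2 hT]]] := herm_spectral hA.
have s_ge0 i : 0 <= s 0 i.
  have [ev nv] := spectral_eigen s i hU1.
  have := hpos (adjmx U *m (delta_mx i 0 : vec)).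
  by rewrite hT ev innerZr nv mulr1.
pose sg : 'rV[C]_d := \row_j sqrtC (s 0 j).
have adj_sg : adjmx (diag_mx sg) = diag_mx sg.
  apply/matrixP => a b; rewrite adjmxE !mxE.
  case: (b == a) / eqP => [->|ba]; first by rewrite eqxx /= !mulr1n conj_nneg // sqrtC_ge0.
  by case: eqP => [ab|_]; [by case: ba|]; rewrite !mulr0n rmorph0.
exists (adjmx U *m diag_mx sg *m U); split; first split.
- by rewrite !adjmxM adjmxK adj_sg mulmxA.
- move=> v.
  rewrite -!mulmxA inner_mulmx adjmxK innerE; apply: sumr_ge0 => i _.
  rewrite mul_diag_mx !mxE mulrCA; apply: mulr_ge0; first by rewrite sqrtC_ge0.
  by rewrite mulrC mul_conjC_ge0.
- rewrite -!mulmxA (mulmxA U) hU1 mul1mx (mulmxA (diag_mx sg)) mulmx_diag.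
  rewrite hT -!mulmxA; congr (_ *m (diag_mx _ *m _)); apply/matrixP => a j.
  by rewrite ord1 !mxE -expr2 sqrtCK.
Qed.

Lemma posop_quad0 (S : op) (v : vec) : posop S -> inner v (S *m v) = 0 -> S *m v = 0.
Proof.
move=> hS h0; have [Q [[hQ hQp] hQQ]] := psqrt_exists hS.
move: h0; rewrite -hQQ -mulmxA (inner_herm hQ) => /inner_eq0 ->.
by rewrite mulmx0.
Qed.

Lemma sqrt_unique (S1 S2 : op) : posop S1 -> posop S2 -> S1 *m S1 = S2 *m S2 -> S1 = S2.
Proof.
move=> h1 h2 h12; have hD : adjmx (S1 - S2) = S1 - S2 by rewrite adjmxB h1.1 h2.1.
have [U [s [hU1 hU2 hDE]]] := herm_spectral hD.
suff s0 : s = 0.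
  by apply/eqP; rewrite -subr_eq0 hDE s0 linear0 mulmx0 mul0mx.
apply/rowP => i; rewrite mxE.
have [ev0 nv] := spectral_eigen s i hU1.
pose v := adjmx U *m (delta_mx i 0 : vec).
have ev : (S1 - S2) *m v = s 0 i *: v by rewrite hDE; exact: ev0.
rewrite -/v in nv.
have sE : s 0 i = inner v ((S1 - S2) *m v) by rewrite ev innerZr nv mulr1.
have h1a := h1.1; have h2a := h2.1.
have sR : (s 0 i)^* = s 0 i by rewrite {1}sE conj_inner -(inner_herm hD).
have hkey : s 0 i * (inner v (S1 *m v) + inner v (S2 *m v)) = 0.
  have h0 : inner v (S1 *m (S1 *m v)) - inner v (S2 *m (S2 *m v)) = 0.
    by rewrite !mulmxA h12 subrr.
  rewrite (inner_herm h1a) (inner_herm h2a) in h0.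
  rewrite mulmxBl in ev.
  have hid : inner (S1 *m v) (S1 *m v) - inner (S2 *m v) (S2 *m v) =
     inner (S1 *m v) (S1 *m v - S2 *m v) + inner (S1 *m v - S2 *m v) (S2 *m v).
    by rewrite innerBr innerBl addrA subrK.
  rewrite hid ev innerZr innerZl sR -(inner_herm h1a) in h0.
  by rewrite mulrDr h0.
move/eqP: hkey; rewrite mulf_eq0 => /orP[/eqP //|].
rewrite paddr_eq0; [|exact: h1.2|exact: h2.2] => /andP[/eqP p1 /eqP p2].
by rewrite sE mulmxBl (posop_quad0 h1 p1) (posop_quad0 h2 p2) subrr inner0r.
Qed.

Lemma sqrt_commute (S T Rf : op) : posop S -> S *m S = T ->
  adjmx Rf = Rf -> Rf *m Rf = 1%:M -> Rf *m T = T *m Rf -> Rf *m S = S *m Rf.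
Proof.
move=> hS hST hR hRR hRT.
have hS' : posop (Rf *m S *m Rf).
  split; first by rewrite !adjmxM hR hS.1 mulmxA.
  move=> v; rewrite -!mulmxA (inner_herm hR); exact: hS.2.
have e' : (Rf *m S *m Rf) *m (Rf *m S *m Rf) = S *m S.
  rewrite -!mulmxA (mulmxA Rf Rf) hRR mul1mx (mulmxA S S) hST mulmxA hRT.
  by rewrite -mulmxA hRR mulmx1.
have hE := sqrt_unique hS' hS e'.
by rewrite -{1}hE !mulmxA hRR mul1mx.
Qed.

End Sqrt.
Section Scalar.
Variable R : realType.

Lemma half_step (dl dl' tau : R) : 0 < tau < 1 -> 0 <= dl -> 0 <= dl' ->
  dl' ^+ 2 = (1 - tau) * dl ^+ 2 -> 2 * dl' <= (2 - tau) * dl.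
Proof. move=> /andP[h1 h2] h3 h4 h5.
have h6 : (2 * dl') ^+ 2 <= ((2 - tau) * dl) ^+ 2.
  rewrite -subr_ge0.
  have -> : ((2 - tau) * dl) ^+ 2 - (2 * dl') ^+ 2 = (tau * dl) ^+ 2 by rewrite !exprMn h5; ring.
  exact: sqr_ge0.
move: h6; rewrite ler_sqr // ?nnegrE //; nra.
Qed.

Lemma decay (b : nat -> R) (th : R) : 0 < th ->
  (forall n, 0 <= b n) -> (forall n, b n.+1 <= b n - th * b n) ->
  forall eps, 0 < eps -> exists N, forall n, (N <= n)%N -> b n < eps.
Proof.
move=> hth hb hs eps heps.
have mono k n : (k <= n)%N -> b n <= b k.
  move=> /subnK <-; elim: (n - k)%N => [|m IH] //; rewrite addSn.
  apply: le_trans (hs _) _; apply: le_trans IH; have := hb (m + k)%N; nra.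
have lin N : (forall k, (k <= N)%N -> eps <= b k) -> b N <= b 0%N - N%:R * (th * eps).
  elim: N => [|N IH] H; first by rewrite mul0r subr0.
  have h1 := IH (fun k hk => H k (leqW hk)).
  have h2 := H N.+1 (leqnn _); have h3 := H N (leqnSn _).
  have := hs N; rewrite -natr1; nra.
pose N0 := Num.Def.archi_bound (b 0%N / (th * eps)).
have hN0 : b 0%N / (th * eps) < N0%:R.
  apply: archi_boundP; apply: divr_ge0 => //; apply: mulr_ge0; exact: ltW.
exists N0 => n hn; apply: le_lt_trans (mono _ _ hn) _.
case: (ltP (b N0) eps) => // hge; exfalso.
have := lin N0 (fun k hk => le_trans hge (mono _ _ hk)).
have hte : 0 < th * eps by apply: mulr_gt0.
move: hN0; rewrite ltr_pdivrMr // => hN0.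
have := hb N0; nra.
Qed.

End Scalar.
Section Scalar2.
Variable R : realType.

Lemma scalar_core (tau : R) (x y w : nat -> R) :
  0 < tau < 1 ->
  (forall n, [/\ 0 <= x n, 0 <= y n, 0 <= w n & w n ^+ 2 <= x n * y n]) ->
  (forall n, x n.+1 ^+ 2 + w n.+1 ^+ 2 = x n ^+ 2 + w n ^+ 2 - tau * x n ^+ 2) ->
  (forall n, y n.+1 ^+ 2 + w n.+1 ^+ 2 = y n ^+ 2 + w n ^+ 2 - tau * w n ^+ 2) ->
  (forall n, (x n.+1 + y n.+1) * w n.+1 = (x n + y n - tau * x n) * w n) ->
  0 < (x 0%N + y 0%N) * w 0%N ->
  forall eps, 0 < eps -> exists N, forall n, (N <= n)%N ->
    (x n ^+ 2 + w n ^+ 2) + (y n ^+ 2 + w n ^+ 2) + 2 * ((x n + y n) * w n) < eps.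
Proof.
move=> htau hpos Hx Hy Hc hc0.
have /andP[ht0 ht1] := htau.
pose t n := x n + y n.
pose dl n := x n * y n - w n ^+ 2.
pose c n := t n * w n.
pose a n := x n ^+ 2 + w n ^+ 2.
pose b n := y n ^+ 2 + w n ^+ 2.
have dl_ge0 n : 0 <= dl n by have [_ _ _ h] := hpos n; rewrite subr_ge0.
have hdl n : dl n.+1 ^+ 2 = (1 - tau) * dl n ^+ 2.
  have -> : dl n.+1 ^+ 2 = (x n.+1 ^+ 2 + w n.+1 ^+ 2) * (y n.+1 ^+ 2 + w n.+1 ^+ 2)
     - ((x n.+1 + y n.+1) * w n.+1) ^+ 2 by rewrite /dl; ring.
  rewrite Hx Hy Hc /dl; ring.
have hdl2 n : 2 * dl n.+1 <= (2 - tau) * dl n by apply: half_step.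
have ht2 n : t n ^+ 2 = a n + b n + 2 * dl n by rewrite /t /a /b /dl; ring.
have hstep n : t n.+1 ^+ 2 <= t n * (t n - tau * x n).
  rewrite ht2 /a /b Hx Hy.
  have := hdl2 n; rewrite /t /dl; nra.
have hcpos n : 0 < c n.
  elim: n => [//|n IH].
  have [hx hy hw _] := hpos n.
  rewrite /c /t Hc.
  have h1 : 0 <= tau * y n * w n by rewrite mulr_ge0 // mulr_ge0 // ltW.
  have : 0 < (1 - tau) * ((x n + y n) * w n) by rewrite mulr_gt0 // subr_gt0.
  move: IH; rewrite /c /t => IH; nra.
have htpos n : 0 < t n.
  have := hcpos n; rewrite /c; have [hx hy hw _] := hpos n.
  rewrite /t; have : 0 <= x n + y n by rewrite addr_ge0.
  rewrite le0r => /orP[/eqP ->|//]; by rewrite mul0r ltxx.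
have hcstep n : c n * t n.+1 ^+ 2 <= c n.+1 * t n ^+ 2.
  have -> : c n.+1 * t n ^+ 2 = (t n * (t n - tau * x n)) * c n.
    by rewrite /c /t Hc; ring.
  by rewrite mulrC ler_wpM2r // ?hstep // ltW.
pose k := c 0%N / t 0%N ^+ 2.
have kpos : 0 < k by rewrite divr_gt0 // exprn_gt0.
have hk n : k * t n ^+ 2 <= c n.
  elim: n => [|n IH]; first by rewrite /k divfK // expf_neq0 // gt_eqF.
  have tn2 : 0 < t n ^+ 2 by rewrite exprn_gt0.
  rewrite -(ler_pM2r tn2); apply: le_trans (hcstep n).
  have tn12 : 0 < t n.+1 ^+ 2 by rewrite exprn_gt0.
  by rewrite mulrAC ler_pM2r.
have hw n : k * t n <= w n.
  have := hk n; rewrite /c expr2 mulrA [_ * t n]mulrC ler_pM2l //.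
have hb_le n : b n <= t n ^+ 2.
  by rewrite ht2 /a; have := dl_ge0 n; nra.
have ha_le n : a n <= t n ^+ 2.
  by rewrite ht2 /b; have := dl_ge0 n; nra.
have hc2 n : c n ^+ 2 <= a n * b n.
  have -> : a n * b n = c n ^+ 2 + dl n ^+ 2 by rewrite /a /b /c /t /dl; ring.
  by rewrite lerDl sqr_ge0.
have hbstep n : b n.+1 <= b n - tau * k ^+ 2 * b n.
  rewrite /b Hy.
  have h1 : (k * t n) ^+ 2 <= w n ^+ 2.
    rewrite ler_sqr ?nnegrE ?hw //; [by rewrite mulr_ge0 // ltW | by have [] := hpos n].
  have h2 := hb_le n; rewrite /b in h2.
  have h3 : k ^+ 2 * (y n ^+ 2 + w n ^+ 2) <= k ^+ 2 * t n ^+ 2 by rewrite ler_wpM2l // sqr_ge0.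
  rewrite exprMn in h1; nra.
have hbdec := decay (th := tau * k ^+ 2) (b := b).
have hb0 n : 0 <= b n by rewrite /b addr_ge0 // sqr_ge0.
have ha n : k ^+ 2 * a n <= b n.
  have h1 : k * a n <= c n by apply: le_trans (hk n); rewrite ler_wpM2l // ltW.
  have ha0 : 0 <= a n by rewrite /a addr_ge0 // sqr_ge0.
  have h2 : (k * a n) ^+ 2 <= a n * b n.
    apply: le_trans (hc2 n); rewrite ler_sqr ?nnegrE //; [by rewrite mulr_ge0 // ltW | exact: ltW].
  move: ha0; rewrite le0r => /orP[/eqP ->|hapos]; first by rewrite mulr0.
  move: h2; rewrite exprMn; nra.
have hcb n : k * c n <= b n.
  have h1 : (k * c n) ^+ 2 <= b n ^+ 2.
    rewrite exprMn; apply: le_trans (ler_wpM2l (sqr_ge0 k) (hc2 n)) _.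
    have := ha n; have := hb0 n; nra.
  move: h1; rewrite ler_sqr ?nnegrE //; by rewrite mulr_ge0 // ltW.
move=> eps heps.
pose M := 1 + k^-1 ^+ 2 + 2 * k^-1.
have Mpos : 0 < M by rewrite /M addr_gt0 // ?addr_gt0 // ?exprn_gt0 ?mulr_gt0 // invr_gt0.
have [N HN] := hbdec (mulr_gt0 ht0 (exprn_gt0 2 kpos)) hb0 hbstep (eps / M) (divr_gt0 heps Mpos).
exists N => n hn.
have hbn := HN n hn.
have e1 : a n <= k^-1 ^+ 2 * b n.
  by rewrite exprVn mulrC ler_pdivlMr ?exprn_gt0 // mulrC; exact: ha.
have e2 : c n <= k^-1 * b n by rewrite mulrC ler_pdivlMr // mulrC; exact: hcb.
have : (a n) + b n + 2 * c n <= M * b n by rewrite /M; nra.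
rewrite -/(a n) -/(b n) -/(c n) -/(t n).
move=> h; apply: le_lt_trans h _.
by rewrite mulrC -ltr_pdivlMr.
Qed.

End Scalar2.
Section Geom.
Variable R : realType.
Local Notation C := (R[i]).
Variable d : nat.
Local Notation vec := 'cV[C]_d.
Local Notation op := 'M[C]_d.

Definition pr2 (e f v : vec) : vec := inner e v *: e + inner f v *: f.

Lemma reduces_herm (A : op) (V : {vspace vec}) : adjmx A = A ->
  Defs.invariant A (fun v => v \in V) -> reduces A V.
Proof.
move=> hA hinv; split => // v hv k hk.
by rewrite (inner_herm hA); apply: hv; apply: hinv.
Qed.

Lemma inner_pr2 (e f v u : vec) : inner e e = 1 -> inner f f = 1 -> inner e f = 0 ->
  [/\ inner e (pr2 e f v) = inner e v, inner f (pr2 e f v) = inner f v &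
      inner (pr2 e f v) u = (inner e v)^* * inner e u + (inner f v)^* * inner f u].
Proof.
move=> he hf hef; have hfe : inner f e = 0 by rewrite -conj_inner hef conjC0.
rewrite /pr2 !innerDr !innerZr he hf hef hfe innerDl !innerZl.
by split => //; rewrite ?mulr1 ?mulr0 ?addr0 ?add0r.
Qed.

Lemma ker_pr2 (e f : vec) : inner e e = 1 -> inner f f = 1 -> inner e f = 0 ->
  let P := ketbra e e + ketbra f f in
  forall v, (v \in lker (linfun (mulmx P))) <-> (inner e v = 0 /\ inner f v = 0).
Proof.
move=> he hf hef P v.
have PE : linfun (mulmx P) v = pr2 e f v by rewrite lfunE /= /P mulmxDl !ketbraE.
rewrite memv_ker PE; split.
  move=> /eqP h0; have := inner_pr2 v v he hf hef; move=> [h1 h2 _].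
  by rewrite -h1 -h2 h0 !inner0r.
by move=> [h1 h2]; rewrite /pr2 h1 h2 !scale0r addr0.
Qed.

Lemma ker_e (e : vec) :
  forall v, (v \in lker (linfun (mulmx (ketbra e e)))) <-> inner e v = 0 \/ e = 0.
Proof.
move=> v; rewrite memv_ker lfunE /= ketbraE scaler_eq0; split.
  by move=> /orP[/eqP|/eqP]; [left|right].
by move=> [->|->]; rewrite eqxx ?orbT.
Qed.

Lemma geometry (e : vec) (T0 : op) (K : {vspace vec}) :
  inner e e = 1 -> adjmx T0 = T0 ->
  max_reducing_in_perp T0 e K -> dim_orth K 2 ->
  exists f : vec, [/\ inner f f = 1, inner e f = 0,
    (forall v, v \in K <-> (inner e v = 0 /\ inner f v = 0)),
    (forall v, orthv K v <-> v = pr2 e f v) & inner f (T0 *m e) != 0].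
Proof.
move=> he hT [hred hsub hmaxK] [W [hWK hdimW]].
have eK : orthv K e by move=> k hk; rewrite -conj_inner hsub // conjC0.
have eW : e \in W by apply/hWK.
have e0 : e != 0 by apply/eqP => e0; move: he; rewrite e0 inner0r => /eqP; rewrite eq_sym oner_eq0.
have [w [wW we]] : exists w, w \in W /\ w \notin <[e]>%VS.
  apply: NNPP => hn; move: hdimW.
  have : (W <= <[e]>)%VS.
    apply/subvP => u uW; apply: NNPP => hu; apply: hn; exists u; split => //; exact/negP.
  move=> /dimvS; rewrite dim_vline e0 => h1 h2; by rewrite h2 in h1.
pose f0 := w - inner e w *: e.
have f0W : f0 \in W by rewrite memvB // memvZ.
have ef0 : inner e f0 = 0 by rewrite innerBr innerZr he mulr1 subrr.
have f00 : f0 != 0.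
  apply/eqP => h; move: we; rewrite (_ : w = inner e w *: e) ?memvZ ?memv_line //.
  by apply/eqP; rewrite -subr_eq0 -/f0 h.
have pf0 : 0 < inner f0 f0.
  rewrite lt_def inner_ge0 andbT; apply/eqP => /inner_eq0 h; by rewrite h eqxx in f00.
pose r := sqrtC (inner f0 f0).
have rpos : 0 < r by rewrite sqrtC_gt0.
pose f := r^-1 *: f0.
have hf : inner f f = 1.
  rewrite innerZl innerZr conj_nneg ?invr_ge0 ?ltW // mulrA -expr2 exprVn.
  by rewrite /r sqrtCK mulVf // gt_eqF.
have hef : inner e f = 0 by rewrite innerZr ef0 mulr0.
have hfe : inner f e = 0 by rewrite -conj_inner hef conjC0.
have fW : f \in W by rewrite memvZ.
have fK : orthv K f by apply/hWK.
clearbody f.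
have hW : forall v, orthv K v <-> v = pr2 e f v.
  move=> v; split; last first.
    by move=> -> k hk; rewrite /pr2 innerDr !innerZr eK // fK // !mulr0 addr0.
  move=> /hWK vW.
  have sumW : (<[e]> + <[f]> == W)%VS.
    rewrite eqEdim subv_add -!memvE eW fW /=.
    rewrite dimv_disjoint_sum ?dim_vline ?e0 ?hdimW //.
      by case: (f =P 0) => // h0; move: hf; rewrite h0 inner0r => /eqP; rewrite eq_sym oner_eq0.
    apply/eqP; rewrite -subv0; apply/subvP => u /memv_capP [/vlineP [a ->] /vlineP [b hb]].
    have : inner e (a *: e) = 0 by rewrite hb innerZr hef mulr0.
    by rewrite innerZr he mulr1 => ->; rewrite scale0r mem0v.
  move: vW; rewrite -(eqP sumW) => /memv_addP [u /vlineP [a ->] [u' /vlineP [b ->] ->]].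
  by rewrite /pr2 !innerDr !innerZr he hf hef hfe !mulr0 !mulr1 addr0 add0r.
pose P := ketbra e e + ketbra f f.
have hK : forall v, v \in K <-> (inner e v = 0 /\ inner f v = 0).
  move=> v; split.
    by move=> vK; split; [exact: hsub | rewrite -conj_inner fK // conjC0].
  move=> /(ker_pr2 he hf hef) vK'.
  suff : (lker (linfun (mulmx P)) <= K)%VS by move=> /subvP; apply.
  apply: hmaxK; last by move=> k /(ker_pr2 he hf hef) [].
  apply: reduces_herm => // u /(ker_pr2 he hf hef) [h1 h2]; apply/(ker_pr2 he hf hef).
  have T0e : T0 *m e = pr2 e f (T0 *m e) by apply/hW; apply: hred.2.
  have T0f : T0 *m f = pr2 e f (T0 *m f) by apply/hW; apply: hred.2.
  rewrite !(inner_herm hT) T0e T0f.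
  have [_ _ ->] := inner_pr2 (T0 *m e) u he hf hef.
  have [_ _ ->] := inner_pr2 (T0 *m f) u he hf hef.
  by rewrite h1 h2 !mulr0 addr0.
exists f; split => //.
apply/eqP => hc.
have T0e : T0 *m e = inner e (T0 *m e) *: e.
  by rewrite {1}(iffLR (hW _) (hred.2 _ eK)) /pr2 hc scale0r addr0.
have : (lker (linfun (mulmx (ketbra e e))) <= K)%VS.
  apply: hmaxK; last by move=> k /ker_e [//|h]; move: e0; rewrite h eqxx.
  apply: reduces_herm => // u /ker_e [h1|h]; last by move: e0; rewrite h eqxx.
  apply/ker_e; left; rewrite (inner_herm hT) T0e innerZl h1 mulr0 //.
move=> /subvP /(_ f) fK'.
have : f \in K by apply: fK'; apply/ker_e; left.
move=> /fK; rewrite hf => /eqP; by rewrite oner_eq0.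
Qed.

End Geom.
Section CS.
Variable R : realType.
Local Notation C := (R[i]).
Variable d : nat.
Local Notation vec := 'cV[C]_d.
Local Notation op := 'M[C]_d.

Lemma psqrt_spec (T : op) : posop T -> posop (psqrt T) /\ psqrt T *m psqrt T = T.
Proof.
move=> hT; rewrite /psqrt.
apply: (@epsilon_spec _ (inhabits 0) (fun S : op => posop S /\ S *m S = T)).
exact: psqrt_exists.
Qed.

Lemma cauchy_schwarz (x y : vec) :
  inner x y * (inner x y)^* <= inner x x * inner y y.
Proof.
have [hx|hx] := eqVneq x 0.
  by rewrite hx !inner0l !mul0r.
have px : 0 < inner x x.
  by rewrite lt_def inner_ge0 andbT; apply: contra_neq hx => /inner_eq0.
set p := inner x x; set a := inner x y.
have hxy : inner y x = a^* by rewrite /a conj_inner.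
have pR : p^* = p by rewrite conj_nneg // ltW.
have h := inner_ge0 (p *: y - a *: x).
rewrite !innerBl !innerBr !innerZl !innerZr -/p -/a hxy pR in h.
have E : p * (p * inner y y) - p * (a * a^*) - (a^* * (p * a) - a^* * (a * p))
  = p * (p * inner y y - a * a^*) by ring.
by rewrite E pmulr_rge0 // subr_ge0 in h.
Qed.

Lemma coord_le1 (v : vec) (i : 'I_d) : inner v v = 1 -> `|v i 0| <= 1.
Proof.
move=> hv; rewrite -(@expr_le1 _ 2) // normCKC -hv innerE (bigD1 i) //=.
by rewrite lerDl sumr_ge0 // => k _; rewrite mulrC mul_conjC_ge0.
Qed.

Lemma ketbra_entry (x y : vec) i j : ketbra x y i j = x i 0 * (y j 0)^*.
Proof. by rewrite /ketbra !mxE big_ord1 adjmxE. Qed.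

Lemma bound4 (a b c c' p q r s : C) : `|p| <= 1 -> `|q| <= 1 -> `|r| <= 1 -> `|s| <= 1 ->
  `|(a * p + c * q) * r + (c' * p + b * q) * s| <= `|a| + `|c| + `|c'| + `|b|.
Proof.
move=> hp hq hr hs.
have k (u v : C) : `|v| <= 1 -> `|u * v| <= `|u|.
  by move=> hv; rewrite normrM; apply: ler_piMr.
apply: le_trans (ler_normD _ _) _.
have h1 : `|(a * p + c * q) * r| <= `|a| + `|c|.
  apply: le_trans (k _ _ hr) _; apply: le_trans (ler_normD _ _) _.
  by apply: lerD; apply: k.
have h2 : `|(c' * p + b * q) * s| <= `|c'| + `|b|.
  apply: le_trans (k _ _ hs) _; apply: le_trans (ler_normD _ _) _.
  by apply: lerD; apply: k.
by apply: le_trans (lerD h1 h2) _; rewrite !addrA.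
Qed.

End CS.
Section Dyn.
Variable R : realType.
Local Notation C := (R[i]).
Variable d : nat.
Local Notation vec := 'cV[C]_d.
Local Notation op := 'M[C]_d.
Variables (e f : vec) (tau : R) (T0 : op) (T : nat -> op).
Hypotheses (he : inner e e = 1) (hf : inner f f = 1) (hef : inner e f = 0).
Hypothesis htau : 0 < tau < 1.
Hypothesis hT0 : posop T0.
Hypothesis hT0K : forall v, inner e v = 0 /\ inner f v = 0 ->
  inner e (T0 *m v) = 0 /\ inner f (T0 *m v) = 0.
Hypothesis hT00 : T 0%N = T0.
Hypothesis hrec : forall n, T n.+1 =
  psqrt (T n) *m (1%:M - (tau%:C)%C *: ketbra e e) *m psqrt (T n).

Let Kp (v : vec) := inner e v = 0 /\ inner f v = 0.
Let Pm : op := ketbra e e + ketbra f f.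
Let pr (v : vec) := pr2 e f v.

Let hfe : inner f e = 0.
Proof. by rewrite -conj_inner hef conjC0. Qed.

Let PmE v : Pm *m v = pr v.
Proof. by rewrite /Pm mulmxDl !ketbraE. Qed.

Let pr_e v : inner e (pr v) = inner e v.
Proof. by have [] := inner_pr2 v v he hf hef. Qed.
Let pr_f v : inner f (pr v) = inner f v.
Proof. by have [] := inner_pr2 v v he hf hef. Qed.
Let pr_l v u : inner (pr v) u = (inner e v)^* * inner e u + (inner f v)^* * inner f u.
Proof. by have [] := inner_pr2 v u he hf hef. Qed.

Let pr_pr v : pr (pr v) = pr v.
Proof. by rewrite {1}/pr /pr2 pr_e pr_f. Qed.

Let pr_Kp k : Kp k -> pr k = 0.
Proof. by move=> [h1 h2]; rewrite /pr /pr2 h1 h2 !scale0r addr0. Qed.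

Let Kp_pr0 k : pr k = 0 -> Kp k.
Proof. by move=> h; split; [rewrite -pr_e h inner0r | rewrite -pr_f h inner0r]. Qed.

Let prD u v : pr (u + v) = pr u + pr v.
Proof. by rewrite -!PmE mulmxDr. Qed.

Let Kp_sub v : Kp (v - pr v).
Proof. by split; rewrite innerBr ?pr_e ?pr_f subrr. Qed.

Let perp_W k u : Kp k -> u = pr u -> inner k u = 0.
Proof.
move=> [h1 h2] ->; rewrite /pr /pr2 innerDr !innerZr.
by rewrite -(conj_inner e) -(conj_inner f) h1 h2 conjC0 !mulr0 addr0.
Qed.

Let W_of_perp u : (forall k, Kp k -> inner k u = 0) -> u = pr u.
Proof.
move=> hu; set r := u - pr u.
have hr : Kp r by exact: Kp_sub.
have : inner r r = 0.
  rewrite {2}/r innerBr hu // /pr /pr2 innerDr !innerZr.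
  by rewrite -(conj_inner e) -(conj_inner f) hr.1 hr.2 conjC0 !mulr0 addr0 subrr.
by move=> /inner_eq0 /eqP; rewrite subr_eq0 => /eqP.
Qed.

Definition Inv n := posop (T n) /\ (forall k, Kp k -> T n *m k = T0 *m k).

Let TW n : Inv n -> forall u, u = pr u -> T n *m u = pr (T n *m u).
Proof.
move=> [hTn hK] u hu; apply: W_of_perp => k hk.
by rewrite (inner_herm hTn.1) hK // (perp_W (hT0K hk) hu).
Qed.

Let Pm_comm n : Inv n -> Pm *m T n = T n *m Pm.
Proof.
move=> hI; apply: mx_ext => v; rewrite -!mulmxA !PmE.
rewrite {1}(_ : v = (v - pr v) + pr v); last by rewrite subrK.
rewrite mulmxDr prD hI.2 ?Kp_sub // pr_Kp ?add0r; last by apply: hT0K; exact: Kp_sub.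
by rewrite -TW // pr_pr.
Qed.

Let Pm_adj : adjmx Pm = Pm.
Proof. by rewrite /Pm adjmxD !adj_ketbra. Qed.

Let Pm_idem : Pm *m Pm = Pm.
Proof. by apply: mx_ext => v; rewrite -mulmxA !PmE pr_pr. Qed.

Let Qm := 1%:M - Pm.
Let Rf := Pm - Qm.

Let Rf_adj : adjmx Rf = Rf.
Proof. by rewrite /Rf /Qm !adjmxB adjmx1 Pm_adj. Qed.

Let PQ : Pm *m Qm = 0.
Proof. by rewrite /Qm mulmxBr mulmx1 Pm_idem subrr. Qed.
Let QP : Qm *m Pm = 0.
Proof. by rewrite /Qm mulmxBl mul1mx Pm_idem subrr. Qed.
Let QQ : Qm *m Qm = Qm.
Proof. by rewrite {1}/Qm mulmxBl mul1mx PQ subr0. Qed.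

Let Rf_sq : Rf *m Rf = 1%:M.
Proof.
rewrite /Rf mulmxBl [Pm *m (Pm - Qm)]mulmxBr [Qm *m (Pm - Qm)]mulmxBr.
rewrite Pm_idem PQ QP QQ subr0 sub0r opprK.
by rewrite /Qm addrC subrK.
Qed.

Let Rf_comm (A : op) : Pm *m A = A *m Pm -> Rf *m A = A *m Rf.
Proof. by move=> h; rewrite /Rf /Qm !mulmxBl !mulmxBr mul1mx mulmx1 h. Qed.

Let Rf_comm_inv (A : op) : Rf *m A = A *m Rf -> Pm *m A = A *m Pm.
Proof.
rewrite /Rf /Qm !mulmxBl !mulmxBr mul1mx mulmx1 => h.
have h2 : Pm *m A + Pm *m A = A *m Pm + A *m Pm.
  have := congr1 (fun M => M + A) h.
  by rewrite !opprB !addrA !subrK.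

move: h2; rewrite -(mulr2n (Pm *m A)) -(mulr2n (A *m Pm)).
rewrite -(scaler_nat 2 (Pm *m A)) -(scaler_nat 2 (A *m Pm)) => /scalerI; apply.
by rewrite pnatr_eq0.
Qed.

Let S n := psqrt (T n).

Let S_spec n : Inv n -> [/\ posop (S n), S n *m S n = T n & Pm *m S n = S n *m Pm].
Proof.
move=> hI; have [hS hSS] := psqrt_spec hI.1; split => //.
apply: Rf_comm_inv; apply: (sqrt_commute hS hSS Rf_adj Rf_sq).
by apply: Rf_comm; exact: Pm_comm.
Qed.

Let S_Kp n : Inv n -> forall k, Kp k -> Kp (S n *m k).
Proof.
move=> hI k hk; have [_ _ hc] := S_spec hI; apply: Kp_pr0.
by rewrite -PmE mulmxA hc -mulmxA PmE pr_Kp // mulmx0.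
Qed.

Let S_W n : Inv n -> forall u, u = pr u -> S n *m u = pr (S n *m u).
Proof.
move=> hI u hu; have [_ _ hc] := S_spec hI.
by rewrite -PmE mulmxA hc -mulmxA PmE -hu.
Qed.

Let T_succ n : Inv n -> forall v, T n.+1 *m v =
  T n *m v - ((tau%:C)%C * inner e (S n *m v)) *: (S n *m e).
Proof.
move=> hI v; have [_ hSS _] := S_spec hI.
rewrite hrec -/(S n) -!mulmxA mulmxBl mul1mx -scalemxAl ketbraE mulmxBr.
by rewrite -!scalemxAr scalerA mulmxA hSS.
Qed.

Let tauC_conj : ((tau%:C)%C)^* = (tau%:C)%C.
Proof. by rewrite conj_nneg // ler0c; have /andP[h _] := htau; exact: ltW. Qed.

Let Inv_succ n : Inv n -> Inv n.+1.
Proof.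
move=> hI; have [hS hSS hc] := S_spec hI.
split; last first.
  move=> k hk; rewrite T_succ // (S_Kp hI hk).1 mulr0 scale0r subr0.
  exact: hI.2.
split.
  rewrite hrec -/(S n) !adjmxM hS.1 adjmxB adjmx1 adjmxZ adj_ketbra tauC_conj.
  by rewrite mulmxA.
move=> v; rewrite T_succ // innerBr innerZr -hSS -mulmxA (inner_herm hS.1 v) (inner_herm hS.1 v e).
set u := S n *m v.
rewrite -(conj_inner e u).
have cs := cauchy_schwarz e u; rewrite he mul1r in cs.
have h1 : 0 <= (1 - tau)%:C%C by rewrite ler0c subr_ge0; have /andP[_ h] := htau; exact: ltW.
have h2 : 0 <= inner e u * (inner e u)^* by rewrite mul_conjC_ge0.
have -> : inner u u - (tau%:C)%C * inner e u * (inner e u)^* =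
  (inner u u - inner e u * (inner e u)^*) + (1 - tau)%:C%C * (inner e u * (inner e u)^*).
  by rewrite rmorphB rmorph1 /=; ring.
by apply: addr_ge0; [rewrite subr_ge0 | apply: mulr_ge0].
Qed.

Lemma InvAll n : Inv n.
Proof.
elim: n => [|n IH]; last exact: Inv_succ.
by rewrite /Inv hT00; split.
Qed.

Let X n := inner e (S n *m e).
Let Y n := inner f (S n *m f).
Let Z n := inner f (S n *m e).

Let e_pr : e = pr e.
Proof. by rewrite /pr /pr2 he hfe scale1r scale0r addr0. Qed.
Let f_pr : f = pr f.
Proof. by rewrite /pr /pr2 hf hef scale1r scale0r add0r. Qed.

Let Se n : S n *m e = X n *: e + Z n *: f.
Proof. by rewrite {1}(S_W (InvAll n) e_pr). Qed.

Let eSf n : inner e (S n *m f) = (Z n)^*.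
Proof.
have [hS _ _] := S_spec (InvAll n).
by rewrite (inner_herm hS.1) -conj_inner.
Qed.

Let Sf n : S n *m f = (Z n)^* *: e + Y n *: f.
Proof. by rewrite {1}(S_W (InvAll n) f_pr) /pr /pr2 eSf. Qed.

Let X_ge0 n : 0 <= X n.
Proof. by have [[_ h] _ _] := S_spec (InvAll n); exact: h. Qed.
Let Y_ge0 n : 0 <= Y n.
Proof. by have [[_ h] _ _] := S_spec (InvAll n); exact: h. Qed.

Lemma scal n : [/\ Z n * (Z n)^* <= X n * Y n,
  inner e (T n *m e) = X n ^+ 2 + Z n * (Z n)^*,
  inner f (T n *m f) = Y n ^+ 2 + Z n * (Z n)^*
  & inner f (T n *m e) = (X n + Y n) * Z n].
Proof.
have [hS hSS _] := S_spec (InvAll n).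
have Xc := conj_nneg (X_ge0 n); have Yc := conj_nneg (Y_ge0 n).
split.
- have [Q [hQ hQQ]] := psqrt_exists hS.
  have cs := cauchy_schwarz (Q *m f) (Q *m e).
  rewrite -!(inner_herm hQ.1) !mulmxA hQQ in cs.
  by move: cs; rewrite [inner f (S n *m f) * _]mulrC.
- rewrite -hSS -mulmxA (inner_herm hS.1 e) Se innerDl !innerDr !innerZl !innerZr.
  by rewrite he hf hef hfe Xc; ring.
- rewrite -hSS -mulmxA (inner_herm hS.1 f) Sf innerDl !innerDr !innerZl !innerZr.
  by rewrite he hf hef hfe Yc conjCK; ring.
- rewrite -hSS -mulmxA (inner_herm hS.1 f) Sf Se innerDl !innerDr !innerZl !innerZr.
  by rewrite he hf hef hfe Yc conjCK; ring.
Qed.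

Lemma scal_succ n :
  [/\ inner e (T n.+1 *m e) = inner e (T n *m e) - (tau%:C)%C * X n ^+ 2,
      inner f (T n.+1 *m f) = inner f (T n *m f) - (tau%:C)%C * (Z n * (Z n)^*)
    & inner f (T n.+1 *m e) = inner f (T n *m e) - (tau%:C)%C * X n * Z n].
Proof.
have hI := InvAll n; rewrite !T_succ // !innerBr !innerZr eSf.
by split; rewrite /X /Z; ring.
Qed.

Lemma dyn_main : inner f (T0 *m e) != 0 -> op_cvg T (T0 *m (1%:M - Pm)).
Proof.
move=> hc0 eps heps.
pose xr n := complex.Re (X n).
pose yr n := complex.Re (Y n).
pose wr n := complex.Re `|Z n|.
have hX n : X n = (xr n)%:C%C by rewrite /xr RRe_real // ger0_real.
have hY n : Y n = (yr n)%:C%C by rewrite /yr RRe_real // ger0_real.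
have hW n : `|Z n| = (wr n)%:C%C by rewrite /wr RRe_real // normr_real.
have hZZ n : Z n * (Z n)^* = (wr n ^+ 2)%:C%C by rewrite -normCK hW rmorphXn.
have hpos n : [/\ 0 <= xr n, 0 <= yr n, 0 <= wr n & wr n ^+ 2 <= xr n * yr n].
  have [hcs _ _ _] := scal n.
  split.
  - by have := X_ge0 n; rewrite hX ler0c.
  - by have := Y_ge0 n; rewrite hY ler0c.
  - by have := normr_ge0 (Z n); rewrite hW ler0c.
  - by move: hcs; rewrite hZZ hX hY -rmorphM lecR.
have Ex n : xr n.+1 ^+ 2 + wr n.+1 ^+ 2 = xr n ^+ 2 + wr n ^+ 2 - tau * xr n ^+ 2.
  have [_ ha' _ _] := scal n.+1; have [_ ha _ _] := scal n; have [hs _ _] := scal_succ n.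
  have hC : X n.+1 ^+ 2 + Z n.+1 * (Z n.+1)^* =
    X n ^+ 2 + Z n * (Z n)^* - (tau%:C)%C * X n ^+ 2 by rewrite -ha' hs ha.
  rewrite !hX !hZZ -!rmorphXn -!rmorphM -!rmorphD -!rmorphB in hC.
  exact: complexI hC.
have Ey n : yr n.+1 ^+ 2 + wr n.+1 ^+ 2 = yr n ^+ 2 + wr n ^+ 2 - tau * wr n ^+ 2.
  have [_ _ hb' _] := scal n.+1; have [_ _ hb _] := scal n; have [_ hs _] := scal_succ n.
  have hC : Y n.+1 ^+ 2 + Z n.+1 * (Z n.+1)^* =
    Y n ^+ 2 + Z n * (Z n)^* - (tau%:C)%C * (Z n * (Z n)^*) by rewrite -hb' hs hb.
  rewrite !hY !hZZ -!rmorphXn -!rmorphM -!rmorphD -!rmorphB in hC.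
  exact: complexI hC.
have Ec n : (xr n.+1 + yr n.+1) * wr n.+1 = (xr n + yr n - tau * xr n) * wr n.
  have [_ _ _ hc'] := scal n.+1; have [_ _ _ hc] := scal n; have [_ _ hs] := scal_succ n.
  have e1 : (X n.+1 + Y n.+1) * Z n.+1 = (X n + Y n - (tau%:C)%C * X n) * Z n.
    by rewrite -hc' hs hc; ring.
  have p1 : 0 <= X n.+1 + Y n.+1 by rewrite addr_ge0.
  have p2 : 0 <= X n + Y n - (tau%:C)%C * X n.
    have [hx hy _ _] := hpos n; have /andP[t0 t1] := htau.
    have : 0 <= xr n + yr n - tau * xr n by nra.
    by rewrite -ler0c !rmorphB !rmorphD !rmorphM /= -hX -hY.
  have hC : (X n.+1 + Y n.+1) * `|Z n.+1| = (X n + Y n - (tau%:C)%C * X n) * `|Z n|.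
    by rewrite -(ger0_norm p1) -(ger0_norm p2) -!normrM e1.
  rewrite !hX !hY !hW -!rmorphM -!rmorphD -!rmorphB -!rmorphM in hC.
  exact: complexI hC.
have Ec0 : 0 < (xr 0%N + yr 0%N) * wr 0%N.
  have h : 0 < `|inner f (T 0%N *m e)| by rewrite normr_gt0 hT00.
  have [_ _ _ hc] := scal 0%N.
  rewrite hc normrM ger0_norm ?addr_ge0 // hX hY hW -rmorphD -rmorphM in h.
  by move: h; rewrite -[X in X < _]/((0 : R)%:C%C) ltcR.
have epsE : eps = (complex.Re eps)%:C%C by rewrite RRe_real // gtr0_real.
have epsr : 0 < complex.Re eps.
  by move: heps; rewrite {1}epsE -[X in X < _]/((0 : R)%:C%C) ltcR.
have [N HN] := scalar_core htau hpos Ex Ey Ec Ec0 epsr.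
exists N => n hn i j.
have hI := InvAll n.
have hT : T n = T0 *m (1%:M - Pm) + (ketbra (T n *m e) e + ketbra (T n *m f) f).
  apply: mx_ext => v.
  rewrite mulmxDl -mulmxA mulmxBl mul1mx PmE -hI.2 ?Kp_sub // mulmxDl !ketbraE.
  by rewrite mulmxBr /pr /pr2 mulmxDr -!scalemxAr subrK.
have hK : T n - T0 *m (1%:M - Pm) = ketbra (T n *m e) e + ketbra (T n *m f) f.
  by rewrite {1}hT addrC addKr.
have E : T n i j - (T0 *m (1%:M - Pm)) i j = (T n - T0 *m (1%:M - Pm)) i j.
  by rewrite !mxE.
rewrite E hK mxE !ketbra_entry.
rewrite (TW hI e_pr) (TW hI f_pr) /pr /pr2 !mxE.
have ca : inner e (T n *m f) = (inner f (T n *m e))^*.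
  by rewrite (inner_herm hI.1.1) -conj_inner.
rewrite ca.
apply: le_lt_trans (bound4 _ _ _ _ (coord_le1 i he) (coord_le1 i hf) _ _) _.
- by rewrite norm_conjC; exact: coord_le1.
- by rewrite norm_conjC; exact: coord_le1.
have [_ ha hb hc] := scal n.
have haR : inner e (T n *m e) = (xr n ^+ 2 + wr n ^+ 2)%:C%C.
  by rewrite ha hX hZZ -rmorphXn -rmorphD.
have hbR : inner f (T n *m f) = (yr n ^+ 2 + wr n ^+ 2)%:C%C.
  by rewrite hb hY hZZ -rmorphXn -rmorphD.
have hcR : `|inner f (T n *m e)| = ((xr n + yr n) * wr n)%:C%C.
  by rewrite hc normrM ger0_norm ?addr_ge0 // hX hY hW -rmorphD -rmorphM.
have [hx hy hw _] := hpos n.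
rewrite norm_conjC haR hbR hcR !ger0_norm ?ler0c ?addr_ge0 ?sqr_ge0 //.
rewrite -!rmorphD epsE ltcR.
have := HN n hn; congr (_ < _); ring.
Qed.

End Dyn.

Unset Implicit Arguments. Set Strict Implicit.

Theorem corollary4p2 (R : realType) (d : nat) (e : 'cV[R[i]]_d) (tau : R)
  (T0 : 'M[R[i]]_d) (T : nat -> 'M[R[i]]_d) (K : {vspace 'cV[R[i]]_d}) :
  inner e e = 1 ->
  0 < tau < 1 ->
  strictly_posop T0 ->
  T 0%N = T0 ->
  (forall n : nat, T n.+1 =
     psqrt (T n) *m (1%:M - (tau%:C)%C *: ketbra e e) *m psqrt (T n)) ->
  max_reducing_in_perp T0 e K ->
  dim_orth K 2 ->
  exists Tinf : 'M[R[i]]_d,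
    [/\ op_cvg T Tinf,
        forall v : 'cV[R[i]]_d, v \in K -> Tinf *m v = T0 *m v &
        forall v : 'cV[R[i]]_d, orthv K v -> Tinf *m v = 0].
Proof.
move=> he htau hT0 hT00 hrec hmax hdim.
have hT0p : posop T0.
  split; first exact: hT0.1.
  move=> v; have [->|hv] := eqVneq v 0; first by rewrite mulmx0 inner0r.
  exact: ltW (hT0.2 v hv).
have [f [hf hef hK hW hc0]] := geometry he hT0.1 hmax hdim.
have hT0K : forall v, inner e v = 0 /\ inner f v = 0 ->
    inner e (T0 *m v) = 0 /\ inner f (T0 *m v) = 0.
  move=> v /hK hv; apply/hK; have [[h1 _] _ _] := hmax; exact: h1.
exists (T0 *m (1%:M - (ketbra e e + ketbra f f))); split.
- exact: (dyn_main he hf hef htau hT0p hT0K hT00 hrec hc0).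
- move=> v /hK [h1 h2].
  by rewrite -mulmxA mulmxBl mul1mx mulmxDl !ketbraE h1 h2 !scale0r addr0 subr0.
- move=> v /hW hv.
  rewrite -mulmxA mulmxBl mul1mx mulmxDl !ketbraE.
  by rewrite {1}hv /pr2 subrr mulmx0.
Qed.
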